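(* Let $n \geq 9$ and $P \in \mathrm{PLS}(2,3;n)$. Then $P$ has a proper reduction (i.e. $P$ is reducible) if and only if $P$ is not completely reduced.
   Context: $\mathrm{PLS}(2,3;n)$ denotes the set of $n\times n$ partial Latin squares on symbols $\{1,\dots,n\}$ (each cell empty or containing one symbol, no symbol repeated in a row or column) in which rows $1,2$ and columns $1,2,3$ are completely filled and all other cells are empty. Write $R_i$ for row $i$ and $C_j$ for column $j$ of $P$. Compositions: for columns $C_j, C_k$ and $l\le 2$, $C_j \circ_l C_k$ is the column identical to $C_j$ except that its entry in row $l$ is $P(l,k)$. For rows $R_j,R_i$ and $l \le 3$, $R_j \circ_l R_i$ is the row identical to $R_j$ except that its entry in column $l$ is $P(i,l)$. An array line is called Latin if it contains no repeated symbol. Replacement: let $\alpha$ be a symbol not occurring in the $2\times 3$ subarray in the upper left corner of $P$, and let $j,k,l,q,r$ be such that $P(j,1)=P(k,2)=P(l,3)=P(1,q)=P(2,r)=\alpha$. A row $R_i$ with $i \in \{3,\dots,n\}$ replaces $\alpha$ if $R_j\circ_1 R_i$, $R_k \circ_2 R_i$ and $R_l \circ_3 R_i$ are all Latin. A column $C_p$ with $p\in\{4,\dots,n\}$ replaces $\alpha$ if $C_q \circ_1 C_p$ and $C_r \circ_2 C_p$ are both Latin; $C_p$ replaces itself if moreover $p \in \{q,r\}$. $P$ is reducible (has a proper reduction) if there exist such a symbol $\alpha$, a row replacing $\alpha$, and a column replacing $\alpha$ and itself. Cycle types: the $(1,2)$-row-permutation of $P$ is the permutation $\sigma$ of $\{1,\dots,n\}$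 with $\sigma(P(1,i))=P(2,i)$ for all $i$. For a cycle $(a_1\,a_2\,\dots\,a_m)$ in the disjoint cycle representation of $\sigma$, its cycle type is the $0/1$ sequence of length $m$ whose $i$th entry is $1$ if $a_i \in \{P(1,1),P(1,2),P(1,3)\}$ and $0$ otherwise. Two sequences are equivalent if one is obtained from the other by a cyclic permutation. $P$ is completely reduced if the cycle type of every cycle of $\sigma$ is equivalent to one of: $00$, $01$, $11$, $101$, $111$, $1010$, $1110$, $10101$, $101010$. *)

(* Defs.v *)
(* Conventions: rows, columns and symbols are 0-indexed,
   i.e. the paper's row/column/symbol k corresponds to index k-1 here;
   symbols {1..n} are represented by 'I_n. *)
From mathcomp Require Import all_boot.
Set Implicit Arguments. Unset Strict Implicit. Unset Printing Implicit Defensive.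

Definition array (n : nat) := 'I_n -> 'I_n -> option 'I_n.

(* Cell access with natural-number indices (out of range cells are empty). *)
Definition cell n (P : array n) (i j : nat) : option 'I_n :=
  match (insub i : option 'I_n), (insub j : option 'I_n) with
  | Some i', Some j' => P i' j'
  | _, _ => None
  end.

Definition row n (P : array n) (i : nat) : nat -> option 'I_n := fun c => cell P i c.
Definition col n (P : array n) (j : nat) : nat -> option 'I_n := fun r => cell P r j.

Definition latin T (L : nat -> option T) : Prop :=
  forall a b, a <> b -> L a = L b -> L a = None.

Definition is_PLS23 n (P : array n) : Prop :=
  (forall i j : 'I_n, P i j <> None <-> (val i < 2 \/ val j < 3)) /\
  (forall i, latin (row P i)) /\ (forall j, latin (col P j)).

(* C_j o_l C_k : column j with its entry in row l replaced by P(l,k). *)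
Definition compC n (P : array n) (j l k : nat) : nat -> option 'I_n :=
  fun r => if r == l then cell P l k else cell P r j.

(* R_j o_l R_i : row j with its entry in column l replaced by P(i,l). *)
Definition compR n (P : array n) (j l i : nat) : nat -> option 'I_n :=
  fun c => if c == l then cell P i l else cell P j c.

Definition avoids_corner n (P : array n) (a : 'I_n) : Prop :=
  forall i j, i < 2 -> j < 3 -> cell P i j <> Some a.

Definition row_replaces n (P : array n) (a : 'I_n) (i : nat) : Prop :=
  2 <= i < n /\
  exists j k l, cell P j 0 = Some a /\ cell P k 1 = Some a /\ cell P l 2 = Some a /\
                 latin (compR P j 0 i) /\ latin (compR P k 1 i) /\ latin (compR P l 2 i).

Definition col_replaces n (P : array n) (a : 'I_n) (p : nat) : Prop :=
  3 <= p < n /\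
  exists q r, [/\ cell P 0 q = Some a, cell P 1 r = Some a,
                 latin (compC P q 0 p) & latin (compC P r 1 p)].

Definition col_replaces_itself n (P : array n) (a : 'I_n) (p : nat) : Prop :=
  col_replaces P a p /\
  exists q r, [/\ cell P 0 q = Some a, cell P 1 r = Some a & (p = q \/ p = r)].

Definition reducible n (P : array n) : Prop :=
  exists a : 'I_n, [/\ avoids_corner P a,
    (exists i, row_replaces P a i) &
    (exists p, col_replaces_itself P a p)].

(* The (1,2)-row-permutation sigma: sigma(P(1,c)) = P(2,c). *)
Definition sigma n (P : array n) (s : 'I_n) : 'I_n :=
  match [pick c : 'I_n | cell P 0 c == Some s] with
  | Some c => odflt s (cell P 1 c)
  | None => s
  end.

Definition top3 n (P : array n) : seq (option 'I_n) :=
  [:: cell P 0 0; cell P 0 1; cell P 0 2].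

Definition cycle_type n (P : array n) (x : 'I_n) : seq bool :=
  [seq (Some a \in top3 P) | a <- orbit (sigma P) x].

Definition cyc_equiv (s t : seq bool) : Prop := exists k, rot k s = t.

Definition allowed_types : seq (seq bool) :=
  [:: [:: false; false]; [:: false; true]; [:: true; true];
      [:: true; false; true]; [:: true; true; true];
      [:: true; false; true; false]; [:: true; true; true; false];
      [:: true; false; true; false; true];
      [:: true; false; true; false; true; false]].

Definition completely_reduced n (P : array n) : Prop :=
  forall x : 'I_n, exists2 t, t \in allowed_types & cyc_equiv (cycle_type P x) t.

(* Main.v *)
Require Import Defs.
From mathcomp Require Import all_boot.
From mathcomp Require Import zify.
From Stdlib Require Import Classical.
Set Implicit Arguments. Unset Strict Implicit. Unset Printing Implicit Defensive.


Fixpoint bseqs (m : nat) : seq (seq bool) :=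
  if m is m'.+1 then [seq b :: t | b <- [:: true; false], t <- bseqs m'] else [:: [::]].

Lemma mem_bseqs (s : seq bool) : s \in bseqs (size s).
Proof.
elim: s => [|b s IH] //=.
rewrite mem_cat; apply/orP; case: b; [left|right]; rewrite ?cats0 (mem_map (fun x y (e : _ :: x = _ :: y) => congr1 behead e)) //.
Qed.

Definition cyc_ok (s : seq bool) : bool :=
  all (fun i => nth false s i || nth false s (i.+1 %% size s)) (iota 0 (size s)).

Definition endsF (s : seq bool) : bool :=
  [&& 2 < size s, ~~ nth false s 0 & ~~ nth false s (size s).-1].

Lemma rotr_small (t : seq bool) k : size t <= 6 -> rotr k t = rotr (minn k 6) t.
Proof.
move=> h; rewrite /rotr; congr (rot _ _); lia.
Qed.

Lemma allowed_no_endsF t k : t \in allowed_types -> ~~ endsF (rotr k t).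
Proof.
move=> ht.
have hs : size t <= 6 by move: t ht; apply/allP; vm_compute.
rewrite rotr_small //.
have : minn k 6 \in iota 0 7 by rewrite mem_iota; lia.
move: (minn k 6) => k'.
move: k'; apply/allP; clear hs; move: t ht; apply/allP; vm_compute; reflexivity.
Qed.

Definition check_ok (s : seq bool) : bool :=
  (count id s <= 3) ==> ((3 <= size s) ==> cyc_ok s) ==>
  has (fun t => has (fun k => rot k s == t) (iota 0 7)) allowed_types.

Definition path_ok (s : seq bool) : bool :=
  all (fun i => nth false s i || nth false s i.+1) (iota 0 (size s).-1).

Lemma bseqs8 : all (fun u => path_ok u ==> (4 <= count id u)) (bseqs 8).
Proof. by vm_compute. Qed.

Lemma bseqs_ok_all : all (fun m => all check_ok (bseqs m)) (iota 2 6).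
Proof. by vm_compute. Qed.

Lemma bseqs_ok m : 2 <= m <= 7 -> all check_ok (bseqs m).
Proof. move=> h; apply: (allP bseqs_ok_all); rewrite mem_iota; lia. Qed.

Lemma finite_classify (s : seq bool) :
  2 <= size s -> count id s <= 3 -> (3 <= size s -> cyc_ok s) ->
  exists2 t, t \in allowed_types & cyc_equiv s t.
Proof.
move=> h2 h3 hc.
case: (leqP (size s) 7) => h7.
  have := @bseqs_ok (size s); rewrite h2 h7 => /(_ isT) /allP /(_ _ (mem_bseqs s)).
  rewrite /check_ok h3 implyTb.
  have -> : (3 <= size s) ==> cyc_ok s by apply/implyP.
  rewrite implyTb.
  move=> /hasP [t ht /hasP [k _ /eqP hk]].
  by exists t => //; exists k.
exfalso.
have hu := allP bseqs8 (take 8 s).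
have : take 8 s \in bseqs 8 by rewrite -{2}(_ : size (take 8 s) = 8) ?mem_bseqs // size_take; case: ifP => //; lia.
move/hu => /implyP H.
have hsz : size (take 8 s) = 8 by rewrite size_take; case: ifP => //; lia.
have : path_ok (take 8 s).
  rewrite /path_ok hsz; apply/allP => i; rewrite mem_iota => /andP [_ hi].
  rewrite !nth_take; try lia.
  move: (hc (ltac:(lia) : 2 < size s)) => /allP /(_ i).
  rewrite mem_iota modn_small; last by lia.
  apply; lia.
move/H.
have : count id (take 8 s) <= count id s.
  by rewrite -{2}(cat_take_drop 8 s) count_cat leq_addr.
lia.
Qed.

Lemma cell_ord n (P : array n) i j (hi : i < n) (hj : j < n) :
  cell P i j = P (Ordinal hi) (Ordinal hj).
Proof. by rewrite /cell (insubT (fun k => k < n) hi) (insubT (fun k => k < n) hj). Qed.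

Lemma cell_out n (P : array n) i j : ~~ (i < n) || ~~ (j < n) -> cell P i j = None.
Proof.
move=> h; rewrite /cell; case: insubP => [i' _ ei|_] //; case: insubP => [j' _ ej|_] //.
by move: h; rewrite -ei -ej !ltn_ord.
Qed.

Lemma cell_some_lt n (P : array n) i j v : cell P i j = Some v -> i < n /\ j < n.
Proof.
case: (boolP (i < n)) => hi; case: (boolP (j < n)) => hj //;
  by rewrite cell_out ?hi ?hj ?orbT.
Qed.

Lemma cell_some n (P : array n) (HP : is_PLS23 P) i j :
  i < n -> j < n -> (i < 2 \/ j < 3) -> exists v, cell P i j = Some v.
Proof.
move=> hi hj h; rewrite (cell_ord P hi hj).
case: HP => [H _]; have := proj2 (H (Ordinal hi) (Ordinal hj)) h.
by case: (P _ _) => // v _; exists v.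
Qed.

Lemma cell_none n (P : array n) (HP : is_PLS23 P) i j :
  2 <= i -> 3 <= j -> cell P i j = None.
Proof.
move=> h2 h3.
case: (boolP (i < n)) => hi; last by rewrite cell_out ?hi.
case: (boolP (j < n)) => hj; last by rewrite cell_out ?hj ?orbT.
rewrite (cell_ord P hi hj).
case: HP => [H _]; case E: (P _ _) => [v|] //.
have := proj1 (H (Ordinal hi) (Ordinal hj)); rewrite E /= => /(_ ltac:(discriminate)).
lia.
Qed.

Lemma row_inj n (P : array n) (HP : is_PLS23 P) i a b v :
  cell P i a = Some v -> cell P i b = Some v -> a = b.
Proof.
move=> ha hb; case: (eqVneq a b) => // /eqP hab.
case: HP => [_ [H _]].
by have := H i a b hab; rewrite /row ha hb => /(_ erefl).
Qed.

Lemma col_inj n (P : array n) (HP : is_PLS23 P) j a b v :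
  cell P a j = Some v -> cell P b j = Some v -> a = b.
Proof.
move=> ha hb; case: (eqVneq a b) => // /eqP hab.
case: HP => [_ [_ H]].
by have := H j a b hab; rewrite /col ha hb => /(_ erefl).
Qed.

Lemma line_surj n (g : nat -> option 'I_n) :
  (forall c, c < n -> exists v, g c = Some v) ->
  (forall a b v, g a = Some v -> g b = Some v -> a = b) ->
  forall v, exists2 c, c < n & g c = Some v.
Proof.
move=> hs hi v.
pose f (c : 'I_n) : 'I_n := odflt c (g c).
have hf (c : 'I_n) : g c = Some (f c) by rewrite /f; case: (hs c (ltn_ord c)) => w ->.
have finj : injective f.
  move=> c c' e; apply: val_inj; apply: (hi _ _ (f c)); [exact: hf | by rewrite e hf].
case: (injF_bij finj) => h _ Kh.
by exists (h v) => //; rewrite hf Kh.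
Qed.

Lemma row_surj n (P : array n) (HP : is_PLS23 P) i :
  i < 2 -> 2 <= n -> forall v, exists2 c, c < n & cell P i c = Some v.
Proof.
move=> hi hn; apply: line_surj.
  by move=> c hc; apply: cell_some => //; [lia | left].
by move=> a b v; apply: row_inj.
Qed.

Lemma col_surj n (P : array n) (HP : is_PLS23 P) j :
  j < 3 -> 3 <= n -> forall v, exists2 r, r < n & cell P r j = Some v.
Proof.
move=> hj hn; apply: line_surj.
  by move=> c hc; apply: cell_some => //; [lia | right].
by move=> a b v; apply: col_inj.
Qed.

Lemma sigmaE n (P : array n) (HP : is_PLS23 P) c y z :
  cell P 0 c = Some y -> cell P 1 c = Some z -> sigma P y = z.
Proof.
move=> h0 h1; rewrite /sigma; case: pickP => [c' /eqP hc'|H].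
  by rewrite (row_inj HP hc' h0) h1.
have [_ hc] := cell_some_lt h0.
by have := H (Ordinal hc); rewrite /= h0 eqxx.
Qed.

Lemma sigma_col n (P : array n) (HP : is_PLS23 P) y : 2 <= n ->
  exists c, [/\ c < n, cell P 0 c = Some y & cell P 1 c = Some (sigma P y)].
Proof.
move=> hn; case: (row_surj HP (isT : 0 < 2) hn y) => c hc h0.
case: (cell_some HP (ltac:(lia) : 1 < n) hc (or_introl isT)) => z h1.
by exists c; split => //; rewrite h1 (sigmaE HP h0 h1).
Qed.

Lemma sigma_inj n (P : array n) (HP : is_PLS23 P) : 2 <= n -> injective (sigma P).
Proof.
move=> hn y y' e.
case: (sigma_col HP y hn) => c [_ h0 h1]; case: (sigma_col HP y' hn) => c' [_ h0' h1'].
rewrite e in h1; rewrite (row_inj HP h1 h1') h0' in h0.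
by case: h0.
Qed.

Lemma sigma_neq n (P : array n) (HP : is_PLS23 P) y : 2 <= n -> sigma P y <> y.
Proof.
move=> hn e; case: (sigma_col HP y hn) => c [_ h0 h1].
rewrite e in h1.
by have := col_inj HP h1 h0.
Qed.

Lemma latin_ext T (L L' : nat -> option T) : (forall k, L k = L' k) -> latin L' -> latin L.
Proof. by move=> e h a b ab; rewrite !e; apply: h. Qed.

Lemma latin2 T (L : nat -> option T) :
  (forall k, 2 <= k -> L k = None) -> L 0 <> L 1 -> latin L.
Proof.
move=> hN h01 a b ab e.
case: (leqP 2 a) => ha; first by apply: hN.
case: (leqP 2 b) => hb; first by rewrite e hN.
exfalso; move: a b ab e ha hb => [|[|a]] [|[|b]] //= ab e ha hb; try lia;
  first [exact: (h01 e) | exact: (h01 (esym e))].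
Qed.

Lemma latin3 T (L : nat -> option T) :
  (forall k, 3 <= k -> L k = None) -> L 0 <> L 1 -> L 0 <> L 2 -> L 1 <> L 2 -> latin L.
Proof.
move=> hN h01 h02 h12 a b ab e.
case: (leqP 3 a) => ha; first by apply: hN.
case: (leqP 3 b) => hb; first by rewrite e hN.
exfalso; move: a b ab e ha hb => [|[|[|a]]] [|[|[|b]]] //= ab e ha hb; try lia;
  first [exact: (h01 e) | exact: (h01 (esym e)) | exact: (h02 e) | exact: (h02 (esym e))
        | exact: (h12 e) | exact: (h12 (esym e))].
Qed.

Lemma count_eq_le1 (T : eqType) (L : nat -> option T) (v : option T) s :
  latin L -> v <> None -> uniq s -> count (fun i => L i == v) s <= 1.
Proof.
move=> hL hv; elim: s => [|x s IH] //= /andP [xs us].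
case: (eqVneq (L x) v) => hx /=; last by rewrite add0n IH.
suff -> : count (fun i => L i == v) s = 0 by [].
apply/eqP; rewrite -leqn0 leqNgt -has_count; apply/hasP => [[y ys /eqP hy]].
have xy : x <> y by move=> e; rewrite e ys in xs.
by apply: hv; rewrite -hx; apply: hL xy _; rewrite hx hy.
Qed.

Lemma count_or T (a b : pred T) s : count (fun i => a i || b i) s <= count a s + count b s.
Proof. elim: s => [|x s IH] //=; case: (a x); case: (b x) => /=; lia. Qed.

Lemma count_or6 T (a1 a2 a3 a4 a5 a6 : pred T) s :
  count (fun i => [|| a1 i, a2 i, a3 i, a4 i, a5 i | a6 i]) s <=
  count a1 s + count a2 s + count a3 s + count a4 s + count a5 s + count a6 s.
Proof.
elim: s => [|x s IH] //=.
case: (a1 x); case: (a2 x); case: (a3 x); case: (a4 x); case: (a5 x); case: (a6 x) => /=; lia.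
Qed.

Lemma row_neq n (P : array n) (HP : is_PLS23 P) i a b :
  a <> b -> (exists v, cell P i a = Some v) -> cell P i a <> cell P i b.
Proof. by move=> ab [v hv] e; rewrite hv in e; apply: ab; apply: (row_inj HP hv (esym e)). Qed.

Lemma top3_notin n (P : array n) v :
  (forall j, j < 3 -> cell P 0 j <> Some v) -> ~~ (Some v \in top3 P).
Proof.
move=> h; rewrite /top3 !inE; apply/negP.
by case/or3P => /eqP e; [apply: (h 0) | apply: (h 1) | apply: (h 2)].
Qed.

Lemma top3_in n (P : array n) v :
  Some v \in top3 P -> exists2 j, j < 3 & cell P 0 j = Some v.
Proof.
rewrite /top3 !inE; case/or3P => /eqP e; by [exists 0 | exists 1 | exists 2].
Qed.

Lemma ct_size n (P : array n) x : size (cycle_type P x) = order (sigma P) x.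
Proof. by rewrite size_map size_orbit. Qed.

Lemma ct_nth n (P : array n) x i : i < order (sigma P) x ->
  nth false (cycle_type P x) i = (Some (iter i (sigma P) x) \in top3 P).
Proof. by move=> hi; rewrite (nth_map x) ?size_orbit // /orbit nth_traject. Qed.

Lemma ct_count n (P : array n) x : count id (cycle_type P x) <= 3.
Proof.
rewrite count_map -size_filter.
set s := filter _ _.
rewrite -(size_map Some s).
have -> : 3 = size (top3 P) by [].
apply: uniq_leq_size.
  by rewrite (map_inj_uniq (@Some_inj _)) filter_uniq // orbit_uniq.
move=> z /mapP [a]; rewrite mem_filter /= => /andP [ha _] ->.
exact: ha.
Qed.

Lemma order_ge2 n (P : array n) (HP : is_PLS23 P) x : 2 <= n -> 2 <= order (sigma P) x.
Proof.
move=> hn; have := order_gt0 (sigma P) x.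
case E: (order _ x) => [|[|m]] // _.
have := iter_order (sigma_inj HP hn) x; rewrite E /= => e.
by case: (sigma_neq HP hn e).
Qed.

Lemma iter_inj T (f : T -> T) i : injective f -> injective (iter i f).
Proof. move=> hf; elim: i => [|i IH] //= a b e; exact: IH (hf _ _ e). Qed.

Lemma dir1 n (P : array n) (HP : is_PLS23 P) : 3 <= n -> reducible P -> ~ completely_reduced P.
Proof.
move=> hn [a [hav _ [p [[hp [q' [r' [h0q h1r hlq hlr]]]] [q [r [h0q2 h1r2 hpqr]]]]]]] hCR.
have hq : q = q' := row_inj HP h0q2 h0q.
have hr : r = r' := row_inj HP h1r2 h1r.
have [hr'n _] := cell_some_lt h1r. have [_ hq'n] := cell_some_lt h0q.
have [_ hr'n2] := cell_some_lt h1r.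
have [y hy] := cell_some HP (ltac:(lia) : 0 < n) hr'n2 (or_introl isT).
have [z hz] := cell_some HP (ltac:(lia) : 1 < n) hq'n (or_introl isT).
have hn2 : 2 <= n by lia.
have sy : sigma P y = a := sigmaE HP hy h1r.
have sa : sigma P a = z := sigmaE HP h0q hz.
have yz : y <> z.
  move=> e; case: hpqr => hp'.
    have := hlr 0 1 ltac:(discriminate); rewrite /compC /=.
    by rewrite hp' hq hy hz e => /(_ erefl).
  have := hlq 0 1 ltac:(discriminate); rewrite /compC /=.
  by rewrite hp' hr hy hz e => /(_ erefl).
case: (hCR a) => t ht [k hk].
have s_eq : cycle_type P a = rotr k t by rewrite -hk rotK.
have := allowed_no_endsF k ht; rewrite -s_eq => /negP; apply.
have hm2 := order_ge2 HP a hn2.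
have hio := iter_order (sigma_inj HP hn2) a.
have hm3 : 2 < order (sigma P) a.
  case E: (order _ a) hm2 => [|[|[|m]]] // _.
  rewrite E /= sa in hio.
  by exfalso; apply: yz; apply: (sigma_inj HP hn2); rewrite hio sy.
rewrite /endsF ct_size hm3 /= ct_nth; last by lia.
rewrite ct_nth; last by lia.
apply/andP; split.
  by apply: top3_notin => j hj; apply: hav.
have -> : iter (order (sigma P) a).-1 (sigma P) a = y.
  apply: (sigma_inj HP hn2); rewrite sy -iterS orderSpred //.
apply: top3_notin => j hj e.
have ej := row_inj HP e hy.
by apply: (hav 1 j) => //; rewrite ej.
Qed.

Lemma reducible_of n (P : array n) (HP : is_PLS23 P) (y : 'I_n) : 9 <= n ->
  ~~ (Some y \in top3 P) -> ~~ (Some (sigma P y) \in top3 P) ->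
  sigma P (sigma P y) <> y -> reducible P.
Proof.
move=> hn hy hsy hssy.
have hn2 : 2 <= n by lia. have hn3 : 3 <= n by lia.
set a := sigma P y.
have hav : avoids_corner P a.
  move=> i j hi hj; case: i hi => [|[|i]] // _ e.
    by move/negP: hsy; apply; rewrite /top3 !inE; move: j hj e => [|[|[|j]]] //= _ ->; rewrite eqxx ?orbT.
  have [_ hjn] := cell_some_lt e.
  have [w hw] := cell_some HP (ltac:(lia) : 0 < n) hjn (or_intror hj).
  have ew : w = y by apply: (sigma_inj HP hn2); rewrite (sigmaE HP hw e).
  move/negP: hy; apply; rewrite -ew /top3 !inE.
  by move: j hj hw {e hjn} => [|[|[|j]]] //= _ ->; rewrite eqxx ?orbT.
have notT v j : ~~ (Some v \in top3 P) -> cell P 0 j = Some v -> 3 <= j.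
  move=> hv e; case: (leqP 3 j) => // hj; exfalso; move/negP: hv; apply.
  by rewrite /top3 !inE; move: j hj e => [|[|[|j]]] //= _ ->; rewrite eqxx ?orbT.
case: (row_surj HP (isT : 0 < 2) hn2 a) => q hqn h0q.
have hq3 := notT _ _ hsy h0q.
case: (sigma_col HP y hn2) => r [hrn h0r h1r].
have hr3 := notT _ _ hy h0r.
have [z hz] := cell_some HP (ltac:(lia) : 1 < n) hqn (or_introl isT).
have sa : sigma P a = z := sigmaE HP h0q hz.
exists a; split => //; last first.
  exists q; split; last by exists q, r; split => //; left.
  split; first by rewrite hq3 hqn.
  exists q, r; split => //.
    apply: (latin_ext (L' := col P q)); last by case: HP => [_ [_ H]]; apply: H.
    by move=> k; rewrite /compC /col; case: eqP => // ->.
  apply: latin2.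
    by move=> k hk; rewrite /compC; case: eqP => [|_]; [lia | apply: (cell_none HP)].
  rewrite /compC /= h0r hz => [[e]]; apply: hssy; by rewrite -/a sa e.
have colj c : c < 3 -> exists2 j, 2 <= j < n & cell P j c = Some a.
  move=> hc; case: (col_surj HP hc hn3 a) => j hjn hj; exists j => //.
  rewrite hjn andbT; case: (leqP 2 j) => // h2.
  by case: (hav j c h2 hc hj).
case: (colj 0 isT) => j /andP [hj2 hjn] hj.
case: (colj 1 isT) => k /andP [hk2 hkn] hk.
case: (colj 2 isT) => l /andP [hl2 hln] hl.
have filled i c : i < n -> c < 3 -> cell P i c <> None.
  by move=> hi hc; case: (cell_some HP hi (ltac:(lia) : c < n) (or_intror hc)) => v ->.
pose bad i := [|| cell P i 0 == cell P j 1, cell P i 0 == cell P j 2,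
   cell P i 1 == cell P k 0, cell P i 1 == cell P k 2,
   cell P i 2 == cell P l 0 | cell P i 2 == cell P l 1].
have colL c : latin (col P c) by case: HP => [_ [_ H]]; apply: H.
have hc1 c i : c < 3 -> i < n -> forall c', c' < 3 ->
   count (fun i' => cell P i' c' == cell P i c) (iota 2 (n - 2)) <= 1.
  move=> hc hi c' hc'; apply: (count_eq_le1 (L := col P c')) => //.
    exact: filled.
  exact: iota_uniq.
have hcnt : count bad (iota 2 (n - 2)) <= 6.
  apply: leq_trans (count_or6 _ _ _ _ _ _ _) _.
  have := hc1 1 j isT hjn 0 isT; have := hc1 2 j isT hjn 0 isT.
  have := hc1 0 k isT hkn 1 isT; have := hc1 2 k isT hkn 1 isT.
  have := hc1 0 l isT hln 2 isT; have := hc1 1 l isT hln 2 isT.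
  lia.
have : has (predC bad) (iota 2 (n - 2)).
  rewrite has_count; have := count_predC bad (iota 2 (n - 2)); rewrite size_iota; lia.
case/hasP => i; rewrite mem_iota => /andP [hi2 hin] /=.
rewrite /bad !negb_or => /andP [/eqP b1 /andP [/eqP b2 /andP [/eqP b3 /andP [/eqP b4 /andP [/eqP b5 /eqP b6]]]]].
have rowS i' c c' : i' < n -> c < 3 -> c' < 3 -> c <> c' -> cell P i' c <> cell P i' c'.
  move=> hi' hc hc' cc; apply: (row_neq HP cc).
  apply: (cell_some HP hi'); [lia | by right].
exists i; split; first by rewrite hi2; lia.
exists j, k, l; split; first by [].
split; first by [].
split; first by [].
split.
  apply: latin3; rewrite /compR //=.
    by move=> c hc; case: eqP => [|_]; [lia | apply: (cell_none HP)].
  exact: rowS.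
split.
  apply: latin3; rewrite /compR //=.
    by move=> c hc; case: eqP => [|_]; [lia | apply: (cell_none HP)].
    by move=> e; apply: b3; rewrite e.
  exact: rowS.
apply: latin3; rewrite /compR //=.
  by move=> c hc; case: eqP => [|_]; [lia | apply: (cell_none HP)].
  exact: rowS.
  by move=> e; apply: b5; rewrite e.
by move=> e; apply: b6; rewrite e.
Qed.

Theorem theorem6 (n : nat) (P : array n) :
  9 <= n -> is_PLS23 P -> (reducible P <-> ~ completely_reduced P).
Proof.
move=> hn HP; split; first by move=> hr; apply: (dir1 HP _ hr); lia.
move=> hnCR; apply: NNPP => hnr; apply: hnCR => x.
have hn2 : 2 <= n by lia.
have hinj := sigma_inj HP hn2.
apply: finite_classify; first by rewrite ct_size; exact: order_ge2.
  exact: ct_count.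
rewrite ct_size => hm3.
rewrite /cyc_ok ct_size; apply/allP => i; rewrite mem_iota add0n => /andP [_ hi].
have hmod : i.+1 %% order (sigma P) x < order (sigma P) x by rewrite ltn_pmod //; lia.
rewrite ct_nth // ct_nth //.
have -> : iter (i.+1 %% order (sigma P) x) (sigma P) x = iter i.+1 (sigma P) x.
  case: (ltnP i.+1 (order (sigma P) x)) => h; first by rewrite modn_small.
  have -> : i.+1 = order (sigma P) x by lia.
  by rewrite modnn /= iter_order.
apply/negPn/negP => /norP [hA hB].
apply: hnr; apply: (reducible_of HP (y := iter i (sigma P) x)) => //.
move=> e.
have e2 : iter 2 (sigma P) x = x.
  apply: (iter_inj (i:=i) hinj); rewrite -iterD addn2 !iterS /=.
  exact: e.
have := orbit_uniq (sigma P) x.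
move/(nth_uniq x (_ : 2 < size (orbit (sigma P) x)) (_ : 0 < size (orbit (sigma P) x))).
rewrite !size_orbit => /(_ hm3 (order_gt0 _ _)).
by rewrite /orbit !nth_traject ?(order_gt0) // e2 eqxx.
Qed.
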